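(* Let $\mathcal Z$ be an arbitrary set, $\mathcal H\subseteq\{0,1\}^{\mathcal Z}$, and $n\in\mathbb N$ with $n\ge\mathfrak s_0(\mathcal H)$. Let $S=(Z_1,\dots,Z_n)\in\mathcal Z^n$ and for each $h\in\mathcal H$ let $A_h(S)=\{i\in[n]:h(Z_i)=1\}$. Then there exists $I\subseteq[n]$ such that $I\cap A_h(S)\ne\emptyset$ for every $h\in\mathcal H$ with $A_h(S)\ne\emptyset$, and $|I|\le\mathfrak s_0(\mathcal H)$.
   Context: The centered star number $\mathfrak s_0(\mathcal H)$ is the largest $m\in\mathbb N$ such that there exist $z_1,\dots,z_m\in\mathcal Z$ and $h_1,\dots,h_m\in\mathcal H$ with $h_i(z_j)=\mathbf 1\{i=j\}$ for all $i,j\in[m]$, and $\infty$ if no finite maximum exists. *)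

(* Defs.v *)
From mathcomp Require Import all_boot.
Set Implicit Arguments. Unset Strict Implicit. Unset Printing Implicit Defensive.

Definition centered_star_witness (Z : Type) (H : (Z -> bool) -> Prop) (m : nat) : Prop :=
  exists (z : 'I_m -> Z) (h : 'I_m -> (Z -> bool)),
    (forall i, H (h i)) /\ (forall i j, h i (z j) = (i == j)).

(* s is the centered star number s0(H): the largest m admitting a witness.
   (If no finite maximum exists, s0(H) = oo and no s satisfies this.) *)
Definition is_centered_star_number (Z : Type) (H : (Z -> bool) -> Prop) (s : nat) : Prop :=
  centered_star_witness H s /\ (forall m, centered_star_witness H m -> m <= s).

Definition A_set (Z : Type) (n : nat) (h : Z -> bool) (S : 'I_n -> Z) : {set 'I_n} :=
  [set i | h (S i)].

(* Main.v *)
Require Import Defs.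
From mathcomp Require Import all_boot.
From Stdlib Require Import Classical ClassicalEpsilon.

Definition hitting (Z : Type) (H : (Z -> bool) -> Prop) n (S : 'I_n -> Z) (I : {set 'I_n}) :=
  forall h, H h -> A_set h S != set0 -> I :&: A_set h S != set0.

Arguments hitting {Z} H {n} S I.

Lemma key (Z : Type) (H : (Z -> bool) -> Prop) (s n : nat)
  (Hs : is_centered_star_number H s) (S : 'I_n -> Z) (I : {set 'I_n}) :
  (forall i, i \in I -> exists h, H h /\ h (S i) /\ forall j, j \in I -> j != i -> ~~ h (S j)) ->
  #|I| <= s.
Proof.
move=> Hex; case: Hs => _ Hmax; apply: Hmax.
pose e := (@enum_val _ (mem I)).
have Hex' : forall j : 'I_#|I|, exists h, H h /\ h (S (e j)) /\
   forall k, k \in I -> k != e j -> ~~ h (S k).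
  by move=> j; apply: Hex; apply: enum_valP.
exists (fun j => S (e j)).
exists (fun j => proj1_sig (constructive_indefinite_description _ (Hex' j))).
split.
  by move=> i; case: (constructive_indefinite_description _ _) => h [].
move=> i j; case: (constructive_indefinite_description _ _) => h /= [_ [h1 h2]].
case: (eqVneq i j) => [<-|ij] //.
apply/negbTE; apply: h2; first exact: enum_valP.
by apply/eqP => /enum_val_inj E; rewrite E eqxx in ij.
Qed.

Theorem lemma11 (Z : Type) (H : (Z -> bool) -> Prop) (s n : nat)
  (Hs : is_centered_star_number H s) (Hn : s <= n) (S : 'I_n -> Z) :
  exists I : {set 'I_n},
    (forall h, H h -> A_set h S != set0 -> I :&: A_set h S != set0) /\ #|I| <= s.
Proof.
suff: forall k (I : {set 'I_n}), #|I| <= k -> hitting H S I ->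
   exists I', hitting H S I' /\ #|I'| <= s.
  move=> /(_ n [set: 'I_n]); rewrite cardsT card_ord leqnn => /(_ isT).
  case.
    by move=> h _ ; rewrite setTI.
  by move=> I' [h1 h2]; exists I'.
elim=> [|k IH] I Ik hI.
  by exists I; split=> //; rewrite (leq_trans Ik).
case: (classic (exists i, i \in I /\ hitting H S (I :\ i))).
  move=> [i [iI hi]]; apply: (IH (I :\ i)) => //.
  by move: Ik; rewrite (cardsD1 i I) iI add1n ltnS.
move=> Hno; exists I; split=> //; apply: (key _ _ _ _ Hs S) => i iI.
apply: NNPP => Hnot; apply: Hno; exists i; split=> // h Hh An.
apply/negP => /eqP E; apply: Hnot; exists h; split=> //.
have := hI h Hh An; case/set0Pn => j; rewrite inE => /andP [jI jA].
have ji : j = i.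
  apply/eqP; apply: contraT => ji.
  by move/setP: E => /(_ j); move: jA; rewrite !inE ji jI => ->.
split; first by move: jA; rewrite ji /A_set inE.
move=> k0 k0I k0i; apply/negP => hk.
by move/setP: E => /(_ k0); rewrite /A_set !inE k0i k0I hk.
Qed.
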